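(* Let $(A,\cdot,\circ)$ be a skew brace such that $A = B\cdot C$ (i.e. every element of $A$ is of the form $bc$ with $b\in B$, $c\in C$) for some sub-skew braces $B$ and $C$ satisfying all of the following: (1) $B$ and $C$ are trivial skew braces; (2) $B$ and $C$ are normal subgroups of $(A,\cdot)$; (3) $B$ and $C$ are left ideals in $A$. Then $A^{(3)} := A'*A = 1$, where $A'=A*A$; that is, $A$ is right nilpotent of index at most $3$.
   Context: A skew brace is a set $A$ with two group operations $\cdot$ (often written by juxtaposition) and $\circ$ such that $a\circ(bc) = (a\circ b)\,a^{-1}\,(a\circ c)$ for all $a,b,c\in A$. The two groups have the same identity $1$; $a^{-1}$ denotes the inverse of $a$ in $(A,\cdot)$ and $\overline{a}$ its inverse in $(A,\circ)$. Define $a*b = a^{-1}(a\circ b)b^{-1}$. For subsets $X,Y\subseteq A$, $X*Y$ denotes the subgroup of $(A,\cdot)$ generated by all $x*y$ with $x\in X$, $y\in Y$. A sub-skew brace is a subset that is a subgroup of both $(A,\cdot)$ and $(A,\circ)$. A skew brace (or sub-skew brace) $B$ is trivial if $a\circ b = ab$ for all $a,b\in B$. A subgroup $I$ of $(A,\cdot)$ is a left ideal in $A$ if $A*I\subseteq I$, and a right ideal in $A$ if $I*A\subseteq I$. *)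

(* Defs.v *)
Section SkewBrace.
Context {T : Type}.

Definition is_group (one : T) (mul : T -> T -> T) (inv : T -> T) : Prop :=
  (forall a b c, mul a (mul b c) = mul (mul a b) c) /\
  (forall a, mul one a = a) /\ (forall a, mul a one = a) /\
  (forall a, mul (inv a) a = one) /\ (forall a, mul a (inv a) = one).

Definition is_skew_brace (one : T) (dot : T -> T -> T) (inv : T -> T)
    (circ : T -> T -> T) (cinv : T -> T) : Prop :=
  is_group one dot inv /\ is_group one circ cinv /\
  (forall a b c, circ a (dot b c) = dot (dot (circ a b) (inv a)) (circ a c)).

Variables (one : T) (dot : T -> T -> T) (inv : T -> T)
          (circ : T -> T -> T) (cinv : T -> T).

Definition star (a b : T) : T := dot (inv a) (dot (circ a b) (inv b)).

Definition subgroup (P : T -> Prop) : Prop :=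
  P one /\ (forall a b, P a -> P b -> P (dot a b)) /\ (forall a, P a -> P (inv a)).

Definition circ_subgroup (P : T -> Prop) : Prop :=
  P one /\ (forall a b, P a -> P b -> P (circ a b)) /\ (forall a, P a -> P (cinv a)).

Definition gen (X : T -> Prop) : T -> Prop :=
  fun z => forall P, subgroup P -> (forall x, X x -> P x) -> P z.

Definition starS (X Y : T -> Prop) : T -> Prop :=
  gen (fun z => exists x y, X x /\ Y y /\ z = star x y).

Definition setT : T -> Prop := fun _ => True.

Definition sub_skew_brace (B : T -> Prop) : Prop := subgroup B /\ circ_subgroup B.

Definition trivial_sub (B : T -> Prop) : Prop :=
  forall a b, B a -> B b -> circ a b = dot a b.

Definition normal_dot (B : T -> Prop) : Prop :=
  subgroup B /\ (forall a b, B b -> B (dot (dot a b) (inv a))).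

Definition left_ideal (I : T -> Prop) : Prop :=
  subgroup I /\ (forall z, starS setT I z -> I z).

Definition A_prime : T -> Prop := starS setT setT.
Definition A_3 : T -> Prop := starS A_prime setT.

End SkewBrace.

(* Main.v *)
Require Import Defs.
From Stdlib Require Import Setoid.

Definition lam {T : Type} (dot : T -> T -> T) (inv : T -> T) (circ : T -> T -> T)
  (a x : T) : T := dot (inv a) (circ a x).

Lemma grp_facts {T : Type} (one : T) dot inv :
  is_group one dot inv ->
  inv one = one /\ (forall a, inv (inv a) = a) /\
  (forall a b, inv (dot a b) = dot (inv b) (inv a)) /\
  (forall a x, dot (inv a) (dot a x) = x) /\ (forall a x, dot a (dot (inv a) x) = x).
Proof.
  intros [dA [d1l [d1r [dVl dVr]]]].
  assert (can1 : forall a x, dot (inv a) (dot a x) = x)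
    by (intros; rewrite dA, dVl, d1l; reflexivity).
  assert (can2 : forall a x, dot a (dot (inv a) x) = x)
    by (intros; rewrite dA, dVr, d1l; reflexivity).
  assert (uniq : forall a b, dot a b = one -> b = inv a).
  { intros a b H. rewrite <- (can1 a b), H, d1r. reflexivity. }
  split; [| split; [| split]]; try (split; assumption).
  - symmetry. apply uniq. apply d1l.
  - intros a. symmetry. apply uniq. apply dVl.
  - intros a b. symmetry. apply uniq.
    rewrite <- dA, (dA b), dVr, d1l, dVr. reflexivity.
Qed.

Lemma lam_facts {T : Type} (one : T) dot inv circ cinv :
  is_skew_brace one dot inv circ cinv ->
  (forall a x, circ a x = dot a (lam dot inv circ a x)) /\
  (forall a x y, lam dot inv circ a (dot x y) =
                 dot (lam dot inv circ a x) (lam dot inv circ a y)) /\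
  (forall a b x, lam dot inv circ (circ a b) x =
                 lam dot inv circ a (lam dot inv circ b x)) /\
  (forall x, lam dot inv circ one x = x).
Proof.
  intros [Hg [[cA [c1l [c1r [cVl cVr]]]] Hbr]].
  destruct (grp_facts _ _ _ Hg) as [i1 [ii [idt [can1 can2]]]].
  destruct Hg as [dA [d1l [d1r [dVl dVr]]]].
  unfold lam.
  assert (cl : forall a x, circ a x = dot a (dot (inv a) (circ a x)))
    by (intros; rewrite can2; reflexivity).
  split; [exact cl | split; [| split]].
  - intros a x y. rewrite Hbr. rewrite <- !dA. reflexivity.
  - intros a b x. rewrite <- cA. rewrite (cl b x) at 1. rewrite Hbr.
    rewrite <- !dA, can1. reflexivity.
  - intros x. rewrite c1l, i1, d1l. reflexivity.
Qed.

Lemma key {T : Type} (one : T) dot inv circ cinv (B C : T -> Prop) :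
  is_skew_brace one dot inv circ cinv ->
  subgroup one dot inv B -> subgroup one dot inv C ->
  trivial_sub dot circ B -> trivial_sub dot circ C ->
  (forall a b, B b -> B (dot (dot a b) (inv a))) ->
  (forall a b, C b -> C (dot (dot a b) (inv a))) ->
  (forall a x, B x -> B (lam dot inv circ a x)) ->
  (forall a x, C x -> C (lam dot inv circ a x)) ->
  forall c1 b2, C c1 -> B b2 ->
  (forall b, B b -> lam dot inv circ (dot (lam dot inv circ c1 b2) (inv b2)) b = b) /\
  (forall c, C c -> lam dot inv circ (dot (lam dot inv circ c1 b2) (inv b2)) c = c).
Proof.
  intros H [B1 [BM BI]] [C1 [CM CI]] trB trC nB nC lB lC c1 b2 Hc1 Hb2.
  destruct (lam_facts _ _ _ _ _ H) as [cl [ldot [lcirc lone]]].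
  destruct H as [Hg _].
  destruct (grp_facts _ _ _ Hg) as [i1 [ii [idt [can1 can2]]]].
  destruct Hg as [dA [d1l [d1r [dVl dVr]]]].
  set (lm := lam dot inv circ) in *.
  assert (trB' : forall b x, B b -> B x -> lm b x = x).
  { intros b x Hb Hx. unfold lm, lam. rewrite trB by assumption. apply can1. }
  assert (trC' : forall b x, C b -> C x -> lm b x = x).
  { intros b x Hb Hx. unfold lm, lam. rewrite trC by assumption. apply can1. }
  set (y := lm c1 b2).
  assert (Hy : B y) by (apply lB; assumption).
  assert (Hu : B (dot y (inv b2))) by auto.
  split.
  { intros b Hb. apply trB'; assumption. }
  intros c Hc.
  set (b3 := dot (dot c1 y) (inv c1)).
  assert (Hb3 : B b3) by (apply nB; assumption).
  set (c4 := lm (inv b3) c1).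
  assert (E1 : circ c1 b2 = circ b3 c4).
  { rewrite cl. fold lm. fold y. unfold c4.
    rewrite cl, <- lcirc. fold lm.
    rewrite (trB b3 (inv b3)) by auto. rewrite dVr, lone.
    unfold b3. rewrite <- !dA, dVl, d1r. reflexivity. }
  assert (claim1 : forall c', C c' -> lm b2 c' = lm b3 c').
  { intros c' Hc'. rewrite <- (trC' c1 (lm b2 c')) by auto.
    rewrite <- lcirc, E1, lcirc, (trC' c4 c') by (unfold c4; auto). reflexivity. }
  set (d := dot (inv y) b3).
  assert (Hd : C d).
  { assert (E : d = dot (dot (dot (inv y) c1) (inv (inv y))) (inv c1)).
    { unfold d, b3. rewrite ii. rewrite <- !dA. reflexivity. }
    rewrite E. apply CM; auto. }
  assert (claim2 : forall c', C c' -> lm b3 c' = lm y c').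
  { intros c' Hc'. assert (E : b3 = circ y d).
    { rewrite trB; [| assumption | unfold d; auto]. unfold d. rewrite can2. reflexivity. }
    rewrite E, lcirc, (trC' d c') by assumption. reflexivity. }
  rewrite <- (trB y (inv b2)) by auto.
  rewrite lcirc, <- claim2, <- claim1 by auto.
  rewrite <- lcirc, trB, dVr, lone by auto. reflexivity.
Qed.

Theorem theorem1p4 (T : Type) (one : T) (dot : T -> T -> T) (inv : T -> T)
    (circ : T -> T -> T) (cinv : T -> T) (B C : T -> Prop) :
  is_skew_brace one dot inv circ cinv ->
  sub_skew_brace one dot inv circ cinv B ->
  sub_skew_brace one dot inv circ cinv C ->
  (forall a, exists b c, B b /\ C c /\ a = dot b c) ->
  trivial_sub dot circ B -> trivial_sub dot circ C ->
  normal_dot one dot inv B -> normal_dot one dot inv C ->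
  left_ideal one dot inv circ B -> left_ideal one dot inv circ C ->
  forall z, A_3 one dot inv circ z -> z = one.
Proof.
  intros H [SB _] [SC _] Hfac trB trC [_ nB] [_ nC] [_ LB] [_ LC].
  pose proof SB as [B1 [BM BI]]. pose proof SC as [C1 [CM CI]].
  pose proof (lam_facts _ _ _ _ _ H) as [cl [ldot [lcirc lone]]].
  pose proof H as [Hg _].
  destruct (grp_facts _ _ _ Hg) as [i1 [ii [idt [can1 can2]]]].
  destruct Hg as [dA [d1l [d1r [dVl dVr]]]].
  set (lm := lam dot inv circ) in *.
  assert (starE : forall a x, star dot inv circ a x = dot (lm a x) (inv x)).
  { intros. unfold star, lm, lam. rewrite dA. reflexivity. }
  assert (lB : forall a x, B x -> B (lm a x)).
  { intros a x Hx. assert (Hs : B (star dot inv circ a x)).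
    { apply LB. intros P _ HP. apply HP. exists a, x. unfold setT. auto. }
    rewrite starE in Hs. replace (lm a x) with (dot (dot (lm a x) (inv x)) x).
    - auto.
    - rewrite <- dA, dVl, d1r. reflexivity. }
  assert (lC : forall a x, C x -> C (lm a x)).
  { intros a x Hx. assert (Hs : C (star dot inv circ a x)).
    { apply LC. intros P _ HP. apply HP. exists a, x. unfold setT. auto. }
    rewrite starE in Hs. replace (lm a x) with (dot (dot (lm a x) (inv x)) x).
    - auto.
    - rewrite <- dA, dVl, d1r. reflexivity. }
  assert (trB' : forall b x, B b -> B x -> lm b x = x).
  { intros b x Hb Hx. unfold lm, lam. rewrite trB by assumption. apply can1. }
  assert (trC' : forall b x, C b -> C x -> lm b x = x).
  { intros b x Hb Hx. unfold lm, lam. rewrite trC by assumption. apply can1. }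
  pose (Fx := fun z => forall y, lm z y = y).
  assert (fixBC : forall z, (forall b, B b -> lm z b = b) -> (forall c, C c -> lm z c = c) -> Fx z).
  { intros z HB HC y. destruct (Hfac y) as [b [c [Hb [Hc ->]]]].
    rewrite ldot, HB, HC by assumption. reflexivity. }
  assert (Fdot : forall z w, Fx z -> Fx w -> Fx (dot z w)).
  { intros z w Hz Hw y. assert (E : dot z w = circ z w) by (rewrite cl, Hz; reflexivity).
    rewrite E, lcirc, Hw, Hz. reflexivity. }
  assert (Finv : forall z, Fx z -> Fx (inv z)).
  { intros z Hz y. assert (E : circ z (inv z) = one) by (rewrite cl, Hz; auto).
    rewrite <- (Hz (lm (inv z) y)), <- lcirc, E, lone. reflexivity. }
  assert (Fone : Fx one) by (intro; apply lone).
  assert (FBC : forall d, B d -> C d -> Fx d).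
  { intros d Hb Hc. apply fixBC; intros; [apply trB' | apply trC']; assumption. }
  assert (nB' : forall a b, B b -> B (dot (dot a b) (inv a))) by exact nB.
  assert (nC' : forall a b, C b -> C (dot (dot a b) (inv a))) by exact nC.
  assert (Kstar : forall a x, Fx (star dot inv circ a x)).
  { intros a x.
    destruct (Hfac a) as [b [c [Hb [Hc ->]]]].
    destruct (Hfac x) as [b2 [c2 [Hb2 [Hc2 ->]]]].
    set (c1 := lm (inv b) c).
    assert (Hc1 : C c1) by (unfold c1; auto).
    assert (Ea : dot b c = circ b c1).
    { rewrite cl. unfold c1. rewrite <- lcirc, trB, dVr, lone by auto. reflexivity. }
    rewrite Ea, starE, ldot, !lcirc.
    rewrite (trB' b (lm c1 b2)) by auto.
    rewrite (trC' c1 c2) by auto.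
    set (y := lm c1 b2). set (y' := lm b c2).
    set (u := dot y (inv b2)). set (v := dot y' (inv c2)).
    set (d := dot (inv v) (dot b2 (dot v (inv b2)))).
    assert (Hv : C v) by (unfold v, y'; auto).
    assert (E : dot (dot y y') (inv (dot b2 c2)) = dot u (dot v d)).
    { unfold d, u, v. rewrite !idt, ?ii. rewrite <- !dA.
      rewrite can1, can2, can1. reflexivity. }
    rewrite E.
    destruct (key one dot inv circ cinv B C H SB SC trB trC nB' nC' lB lC c1 b2 Hc1 Hb2)
      as [KB KC].
    destruct (key one dot inv circ cinv C B H SC SB trC trB nC' nB' lC lB b c2 Hb Hc2)
      as [KC' KB'].
    apply Fdot; [apply fixBC; assumption |].
    apply Fdot; [apply fixBC; assumption |].
    apply FBC.
    - assert (Ed : d = dot (dot (dot (inv v) b2) (inv (inv v))) (inv b2)).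
      { unfold d. rewrite ii, <- !dA. reflexivity. }
      rewrite Ed. auto.
    - unfold d. apply CM; auto. rewrite dA. auto. }
  assert (Aprime : forall x, A_prime one dot inv circ x -> Fx x).
  { intros x Hx. apply Hx.
    - split; [exact Fone | split; [exact Fdot | exact Finv]].
    - intros w [a [b [_ [_ ->]]]]. apply Kstar. }
  intros z Hz. apply Hz.
  - split; [reflexivity | split].
    + intros a b -> ->. apply d1l.
    + intros a ->. exact i1.
  - intros w [x [y [Hx [_ ->]]]].
    apply Aprime in Hx.
    rewrite starE. unfold Fx in Hx. rewrite Hx. apply dVr.
Qed.
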